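(* Let $k \ge 2$ be an integer. Among $2^k$ identical-looking coins, exactly two of which are counterfeit, there is an adaptive strategy that determines both counterfeit coins using at most $k+1$ weighings on a 5-way scale.
   Context: Coins look identical; all genuine coins have one common weight, all counterfeit coins have one common weight strictly less than the genuine weight. A weighing places two disjoint sets of coins of equal cardinality on the left and right pans. Let $d$ = (number of counterfeit coins on the left pan) $-$ (number of counterfeit coins on the right pan). A 5-way scale reports MUCH LESS if $d \ge 2$, LESS if $d = 1$, EQUAL if $d = 0$, MORE if $d = -1$, MUCH MORE if $d \le -2$. A strategy chooses each weighing possibly depending on previous outcomes; it determines the counterfeit coins if the sequence of outcomes uniquely identifies the set of counterfeit coins. *)

(* Defs.v *)
From mathcomp Require Import all_boot.
Set Implicit Arguments. Unset Strict Implicit. Unset Printing Implicit Defensive.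

Inductive outcome := MuchLess | Less | Equal | More | MuchMore.

Definition weigh (n : nat) (S L R : {set 'I_n}) : outcome :=
  let a := #|S :&: L| in let b := #|S :&: R| in
  if b.+2 <= a then MuchLess
  else if a == b.+1 then Less
  else if a == b then Equal
  else if b == a.+1 then More
  else MuchMore.

Inductive strategy (n : nat) :=
| Stop
| Weigh (L R : {set 'I_n}) (next : outcome -> strategy n).

Fixpoint transcript (n : nat) (t : strategy n) (S : {set 'I_n}) : seq outcome :=
  match t with
  | Stop => [::]
  | Weigh L R f => let o := weigh S L R in o :: transcript (f o) S
  end.

Fixpoint legal_on (n : nat) (t : strategy n) (S : {set 'I_n}) : Prop :=
  match t with
  | Stop => True
  | Weigh L R f =>
      [/\ [disjoint L & R], #|L| = #|R| & legal_on (f (weigh S L R)) S]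
  end.

(* Main.v *)
Require Import Defs.
From mathcomp Require Import all_boot zify.
Set Implicit Arguments. Unset Strict Implicit.

Definition itv n lo len : {set 'I_n} := [set i : 'I_n | lo <= i < lo + len].

Lemma count_itv lo len m : lo + len <= m ->
  count (fun i => lo <= i < lo + len) (iota 0 m) = len.
Proof.
move=> H.
have -> : m = lo + (len + (m - lo - len)) by lia.
rewrite iotaD iotaD !count_cat.
rewrite (eq_in_count (a2 := pred0)); last by move=> z; rewrite mem_iota /=; lia.
rewrite count_pred0.
rewrite (eq_in_count (a2 := predT)); last by move=> z; rewrite mem_iota /=; lia.
rewrite count_predT size_iota.
rewrite (eq_in_count (a2 := pred0)); last by move=> z; rewrite mem_iota /=; lia.
by rewrite count_pred0; lia.
Qed.

Lemma card_itv n lo len : lo + len <= n -> #|itv n lo len| = len.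
Proof.
move=> H; rewrite /itv -sum1dep_card -(big_mkord (fun i => lo <= i < lo + len) (fun _ => 1)).
by rewrite /index_iota subn0 sum1_count count_itv.
Qed.

Lemma disjP' (T : finType) (A B : {set T}) :
  (forall z, z \in A -> z \in B -> False) -> [disjoint A & B].
Proof.
move=> H; rewrite -setI_eq0; apply/eqP/setP => z; rewrite inE in_set0.
by apply/negbTE/negP => /andP [] /H.
Qed.

Lemma card_disjU (T : finType) (A B : {set T}) :
  [disjoint A & B] -> #|A :|: B| = #|A| + #|B|.
Proof. by move=> H; rewrite cardsU (disjoint_setI0 H) cards0 subn0. Qed.

Lemma cardI2 (T : finType) (x y : T) (A : {set T}) : x != y ->
  #|[set x; y] :&: A| = (x \in A) + (y \in A).
Proof.
move=> xy; rewrite setIUl cardsU.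
have -> : ([set x] :&: A) :&: ([set y] :&: A) = set0.
  apply/setP => z; rewrite !inE.
  by case: eqP => [->|] //=; rewrite (negbTE xy) andbF.
rewrite cards0 subn0.
have E : forall w, #|[set w] :&: A| = (w \in A).
  move=> w; case: (boolP (w \in A)) => h.
    have -> : [set w] :&: A = [set w].
      by apply/setP => z; rewrite !inE; case: eqP => [->|] //=; rewrite h.
    by rewrite cards1.
  have -> : [set w] :&: A = set0.
    by apply/setP => z; rewrite !inE; case: eqP => [->|] /=; rewrite ?(negbTE h) ?andbF.
  by rewrite cards0.
by rewrite !E.
Qed.

Section S.
Variable n : nat.

Definition good (t : strategy n) (P : {set 'I_n} -> Prop) (N : nat) :=
  (forall S, P S -> legal_on t S /\ size (transcript t S) <= N) /\
  (forall S1 S2, P S1 -> P S2 -> transcript t S1 = transcript t S2 -> S1 = S2).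

Lemma good_stop P N : (forall S1 S2, P S1 -> P S2 -> S1 = S2) -> good (Stop n) P N.
Proof. move=> H; split; first by move=> S _; split. by move=> S1 S2 h1 h2 _; apply: H. Qed.

Lemma good_weigh (L R : {set 'I_n}) (f : outcome -> strategy n) P N : [disjoint L & R] -> #|L| = #|R| ->
  (forall o, good (f o) (fun S => P S /\ weigh S L R = o) N) ->
  good (Weigh L R f) P N.+1.
Proof.
move=> dLR cLR H; split.
  move=> S PS /=; have [H1 _] := H (weigh S L R).
  by have [? ?] := H1 S (conj PS erefl); split.
move=> S1 S2 P1 P2 /= [E1 E2].
have [_ H2] := H (weigh S1 L R); apply: H2 => //.
by rewrite -E1 in E2.
Qed.

Lemma good_weaken t P Q N M : good t P N -> (forall S, Q S -> P S) -> N <= M -> good t Q M.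
Proof.
move=> [H1 H2] QP NM; split.
  by move=> S /QP /H1 [? ?]; split => //; apply: leq_trans NM.
by move=> S1 S2 /QP h1 /QP h2; apply: H2.
Qed.

Definition pair2 (x y : 'I_n) : {set 'I_n} := [set x; y].

Fixpoint split_st (a b f j : nat) : strategy n :=
  match j with
  | 0 => Stop n
  | j'.+1 => let h := 2 ^ j' in
     Weigh (itv n a h :|: itv n (b + h) h) (itv n (a + h) h :|: itv n f h)
       (fun o => match o with
                 | MuchLess => split_st a (b + h) f j'
                 | Less => split_st a b f j'
                 | Equal => split_st (a + h) (b + h) f j'
                 | More => split_st (a + h) b f j'
                 | MuchMore => Stop n end)
  end.

Definition Isplit a b j (S : {set 'I_n}) :=
  exists x y : 'I_n, S = [set x; y] /\ a <= x < a + 2 ^ j /\ b <= y < b + 2 ^ j.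

Ltac decide_leq :=
  repeat match goal with
  | |- context [?u <= ?v] =>
      (have -> : (u <= v) = true by lia) || (have -> : (u <= v) = false by lia)
  end.

Lemma weigh_split a b f h (x y : 'I_n) :
  a + 2 * h <= b \/ b + 2 * h <= a -> a + 2 * h <= f \/ f + h <= a ->
  b + 2 * h <= f \/ f + h <= b ->
  a <= x < a + 2 * h -> b <= y < b + 2 * h ->
  weigh [set x; y] (itv n a h :|: itv n (b + h) h) (itv n (a + h) h :|: itv n f h) =
  if x < a + h then (if y < b + h then Less else MuchLess)
  else (if y < b + h then More else Equal).
Proof.
move=> d1 d2 d3 hx hy.
have xy : x != y by apply/eqP => E; rewrite E in hx; lia.
rewrite /weigh !cardI2 // /itv !inE.
by case: (ltnP x (a + h)) => ?; case: (ltnP y (b + h)) => ?;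
  repeat (case: ifP => ?); try done; lia.
Qed.

Ltac dest_inv := let x := fresh "x" in let y := fresh "y" in
  let hx := fresh "hx" in let hy := fresh "hy" in
  move=> [x [y [-> [hx hy]]]].

Lemma split_good j : forall a b f,
  a + 2 ^ j <= n -> b + 2 ^ j <= n -> f + 2 ^ j <= n ->
  (a + 2 ^ j <= b \/ b + 2 ^ j <= a) -> (a + 2 ^ j <= f \/ f + 2 ^ j <= a) ->
  (b + 2 ^ j <= f \/ f + 2 ^ j <= b) ->
  good (split_st a b f j) (Isplit a b j) j.
Proof.
elim: j => [|j IH] a b f Ha Hb Hf d1 d2 d3.
  apply: good_stop => S1 S2 [x1 [y1 [-> [hx1 hy1]]]] [x2 [y2 [-> [hx2 hy2]]]].
  rewrite expn0 in hx1 hy1 hx2 hy2.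
  have -> : x1 = x2 by apply: val_inj => /=; lia.
  have -> : y1 = y2 by apply: val_inj => /=; lia.
  by [].
rewrite expnS in Ha Hb Hf d1 d2 d3 *.
rewrite /=; set h := 2 ^ j in Ha Hb Hf d1 d2 d3 IH *.
have D1 : [disjoint itv n a h & itv n (b + h) h]
  by apply: disjP' => z; rewrite /itv !inE; lia.
have D2 : [disjoint itv n (a + h) h & itv n f h]
  by apply: disjP' => z; rewrite /itv !inE; lia.
apply: good_weigh.
- by apply: disjP' => z; rewrite /itv !inE; lia.
- by rewrite !card_disjU // !card_itv //; lia.
have W : forall x y : 'I_n, a <= x < a + 2 * h -> b <= y < b + 2 * h ->
  weigh [set x; y] (itv n a h :|: itv n (b + h) h) (itv n (a + h) h :|: itv n f h) =
  if x < a + h then (if y < b + h then Less else MuchLess)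
  else (if y < b + h then More else Equal).
  by move=> x y hx hy; apply: weigh_split => //; lia.
have hh : 2 ^ j = h by [].
have hh2 : 2 ^ j.+1 = 2 * h by rewrite expnS.
case.
- apply: (good_weaken (IH a (b + h) f _ _ _ _ _ _)); try lia.
  move=> S [[x [y [-> [hx hy]]]]]; rewrite W; [|lia|lia].
  by case: ifP => ?; case: ifP => ? // E; try discriminate E; exists x, y; split => //; lia.
- apply: (good_weaken (IH a b f _ _ _ _ _ _)); try lia.
  move=> S [[x [y [-> [hx hy]]]]]; rewrite W; [|lia|lia].
  by case: ifP => ?; case: ifP => ? // E; try discriminate E; exists x, y; split => //; lia.
- apply: (good_weaken (IH (a + h) (b + h) f _ _ _ _ _ _)); try lia.
  move=> S [[x [y [-> [hx hy]]]]]; rewrite W; [|lia|lia].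
  by case: ifP => ?; case: ifP => ? // E; try discriminate E; exists x, y; split => //; lia.
- apply: (good_weaken (IH (a + h) b f _ _ _ _ _ _)); try lia.
  move=> S [[x [y [-> [hx hy]]]]]; rewrite W; [|lia|lia].
  by case: ifP => ?; case: ifP => ? // E; try discriminate E; exists x, y; split => //; lia.
- apply: good_stop => S1 S2 [[x [y [-> [hx hy]]]]]; rewrite W; [|lia|lia].
  by case: ifP => ?; case: ifP.
Qed.

Lemma weigh_same s h (x y : 'I_n) : x != y ->
  s <= x < s + 2 * h -> s <= y < s + 2 * h ->
  weigh [set x; y] (itv n s h) (itv n (s + h) h) =
  if x < s + h then (if y < s + h then MuchLess else Equal)
  else (if y < s + h then Equal else MuchMore).
Proof.
move=> xy hx hy; rewrite /weigh !cardI2 // /itv !inE.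
by case: (ltnP x (s + h)) => ?; case: (ltnP y (s + h)) => ?;
  repeat (case: ifP => ?); try done; lia.
Qed.

Lemma weigh_one s h (x y : 'I_n) : x != y ->
  s <= x < s + 2 * h -> ~~ (s <= y < s + 2 * h) ->
  weigh [set x; y] (itv n s h) (itv n (s + h) h) =
  if x < s + h then Less else More.
Proof.
move=> xy hx hy; rewrite /weigh !cardI2 // /itv !inE.
by case: (ltnP x (s + h)) => ?;
  repeat (case: ifP => ?); try done; lia.
Qed.

Fixpoint same_st (s g j : nat) : strategy n :=
  match j with
  | 0 => Stop n
  | j'.+1 => let h := 2 ^ j' in
     Weigh (itv n s h) (itv n (s + h) h)
       (fun o => match o with
                 | MuchLess => same_st s (s + h) j'
                 | Equal => split_st s (s + h) g j'
                 | MuchMore => same_st (s + h) s j'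
                 | _ => Stop n end)
  end.

Definition Isame s j (S : {set 'I_n}) :=
  exists x y : 'I_n, x != y /\ S = [set x; y] /\ s <= x < s + 2 ^ j /\ s <= y < s + 2 ^ j.

Lemma same_good j : forall s g,
  s + 2 ^ j <= n -> g + 2 ^ j <= n -> (s + 2 ^ j <= g \/ g + 2 ^ j <= s) ->
  good (same_st s g j) (Isame s j) j.
Proof.
elim: j => [|j IH] s g Hs Hg d.
  apply: good_stop => S1 S2 [x [y [xy [_ [hx hy]]]]].
  rewrite expn0 in hx hy.
  by case/eqP: xy; apply: val_inj => /=; lia.
rewrite expnS in Hs Hg d *.
rewrite /=; set h := 2 ^ j in Hs Hg d IH *.
have hh : 2 ^ j = h by [].
have hh2 : 2 ^ j.+1 = 2 * h by rewrite expnS.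
apply: good_weigh.
- by apply: disjP' => z; rewrite /itv !inE; lia.
- by rewrite !card_itv //; lia.
case.
- apply: (good_weaken (IH s (s + h) _ _ _)); try lia.
  move=> S [[x [y [xy [-> [hx hy]]]]]]; rewrite weigh_same //; [|lia|lia].
  by case: ifP => ?; case: ifP => ? // E; try discriminate E; exists x, y; split; [done|split; [done|lia]].
- apply: good_stop => S1 S2 [[x [y [xy [-> [hx hy]]]]]]; rewrite weigh_same //; [|lia|lia].
  by case: ifP => ?; case: ifP.
- apply: (good_weaken (split_good (a := s) (b := s + h) (f := g) _ _ _ _ _ _)); try lia.
  move=> S [[x [y [xy [-> [hx hy]]]]]]; rewrite weigh_same //; [|lia|lia].
  case: ifP => ?; case: ifP => ? // E; try discriminate E.
    by exists x, y; split; [done|lia].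
  by exists y, x; rewrite setUC; split; [done|lia].
- apply: good_stop => S1 S2 [[x [y [xy [-> [hx hy]]]]]]; rewrite weigh_same //; [|lia|lia].
  by case: ifP => ?; case: ifP.
- apply: (good_weaken (IH (s + h) s _ _ _)); try lia.
  move=> S [[x [y [xy [-> [hx hy]]]]]]; rewrite weigh_same //; [|lia|lia].
  by case: ifP => ?; case: ifP => ? // E; try discriminate E; exists x, y; split; [done|split; [done|lia]].
Qed.

Lemma weigh_one2 s h (x y : 'I_n) : x != y ->
  s <= y < s + 2 * h -> ~~ (s <= x < s + 2 * h) ->
  weigh [set x; y] (itv n s h) (itv n (s + h) h) =
  if y < s + h then Less else More.
Proof. by move=> xy hy hx; rewrite setUC; apply: weigh_one; rewrite // eq_sym. Qed.

Definition W3 q k' u ff : strategy n :=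
  Weigh (itv n (2 * q) q) (itv n (2 * q + q) q)
    (fun o => match o with
              | Less => split_st u (2 * q) ff k'
              | More => split_st u (2 * q + q) ff k'
              | _ => Stop n end).

Definition I3 q u (S : {set 'I_n}) :=
  exists x y : 'I_n, S = [set x; y] /\ u <= x < u + q /\ 2 * q <= y < 4 * q.

Lemma w3_good q k' u ff : n = 4 * q -> q = 2 ^ k' ->
  (u = 0 /\ ff = q \/ u = q /\ ff = 0) -> good (W3 q k' u ff) (I3 q u) k'.+1.
Proof.
move=> hn hq huf.
have hq0 : 0 < q by rewrite hq expn_gt0.
apply: good_weigh.
- by apply: disjP' => z; rewrite /itv !inE; lia.
- by rewrite !card_itv //; lia.
have W : forall x y : 'I_n, u <= x < u + q -> 2 * q <= y < 4 * q ->
  weigh [set x; y] (itv n (2 * q) q) (itv n (2 * q + q) q) =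
  if y < 2 * q + q then Less else More.
  move=> x y hx hy; apply: weigh_one2; try lia.
  by apply/eqP => E; rewrite E in hx; lia.
case.
- by apply: good_stop => S1 S2 [[x [y [-> [hx hy]]]]]; rewrite W //; case: ifP.
- apply: (good_weaken (split_good (j := k') (a := u) (b := 2 * q) (f := ff) _ _ _ _ _ _)); try lia.
  move=> S [[x [y [-> [hx hy]]]]]; rewrite W //.
  by case: ifP => ? // _; exists x, y; split; [done|lia].
- by apply: good_stop => S1 S2 [[x [y [-> [hx hy]]]]]; rewrite W //; case: ifP.
- apply: (good_weaken (split_good (j := k') (a := u) (b := 2 * q + q) (f := ff) _ _ _ _ _ _)); try lia.
  move=> S [[x [y [-> [hx hy]]]]]; rewrite W //.
  by case: ifP => ? // _; exists x, y; split; [done|lia].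
- by apply: good_stop => S1 S2 [[x [y [-> [hx hy]]]]]; rewrite W //; case: ifP.
Qed.

Definition W2 q k' : strategy n :=
  Weigh (itv n 0 q) (itv n (0 + q) q)
    (fun o => match o with
              | Less => W3 q k' 0 q
              | More => W3 q k' q 0
              | _ => Stop n end).

Definition I2 q (S : {set 'I_n}) :=
  exists x y : 'I_n, S = [set x; y] /\ x < 2 * q /\ 2 * q <= y < 4 * q.

Lemma w2_good q k' : n = 4 * q -> q = 2 ^ k' -> good (W2 q k') (I2 q) k'.+2.
Proof.
move=> hn hq.
have hq0 : 0 < q by rewrite hq expn_gt0.
apply: good_weigh.
- by apply: disjP' => z; rewrite /itv !inE; lia.
- by rewrite !card_itv //; lia.
have W : forall x y : 'I_n, x < 2 * q -> 2 * q <= y < 4 * q ->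
  weigh [set x; y] (itv n 0 q) (itv n (0 + q) q) =
  if x < 0 + q then Less else More.
  move=> x y hx hy; apply: weigh_one; try lia.
  by apply/eqP => E; rewrite E in hx; lia.
case.
- by apply: good_stop => S1 S2 [[x [y [-> [hx hy]]]]]; rewrite W //; case: ifP.
- apply: (good_weaken (w3_good (k' := k') (u := 0) (ff := q) hn hq _)); try lia.
  move=> S [[x [y [-> [hx hy]]]]]; rewrite W //.
  by case: ifP => ? // _; exists x, y; split; [done|lia].
- by apply: good_stop => S1 S2 [[x [y [-> [hx hy]]]]]; rewrite W //; case: ifP.
- apply: (good_weaken (w3_good (k' := k') (u := q) (ff := 0) hn hq _)); try lia.
  move=> S [[x [y [-> [hx hy]]]]]; rewrite W //.
  by case: ifP => ? // _; exists x, y; split; [done|lia].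
- by apply: good_stop => S1 S2 [[x [y [-> [hx hy]]]]]; rewrite W //; case: ifP.
Qed.

Definition top_st k' : strategy n :=
  let q := 2 ^ k' in
  Weigh (itv n 0 (2 * q)) (itv n (0 + 2 * q) (2 * q))
    (fun o => match o with
              | MuchLess => same_st 0 (0 + 2 * q) k'.+1
              | Equal => W2 q k'
              | MuchMore => same_st (0 + 2 * q) 0 k'.+1
              | _ => Stop n end).

Definition Itop (S : {set 'I_n}) := exists x y : 'I_n, x != y /\ S = [set x; y].

Lemma top_good k' : n = 4 * 2 ^ k' -> good (top_st k') Itop k'.+3.
Proof.
move=> hn; rewrite /top_st; set q := 2 ^ k' in hn *.
have hq0 : 0 < q by rewrite /q expn_gt0.
have hq2 : 2 ^ k'.+1 = 2 * q by rewrite expnS.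
apply: good_weigh.
- by apply: disjP' => z; rewrite /itv !inE; lia.
- by rewrite !card_itv //; lia.
have W : forall x y : 'I_n, x != y ->
  weigh [set x; y] (itv n 0 (2 * q)) (itv n (0 + 2 * q) (2 * q)) =
  if x < 0 + 2 * q then (if y < 0 + 2 * q then MuchLess else Equal)
  else (if y < 0 + 2 * q then Equal else MuchMore).
  move=> x y xy; apply: weigh_same => //.
    by have := ltn_ord x; lia.
  by have := ltn_ord y; lia.
case.
- apply: (good_weaken (same_good (j := k'.+1) (s := 0) (g := 0 + 2 * q) _ _ _)); try lia.
  move=> S [[x [y [xy ->]]]]; rewrite W //.
  by case: ifP => ?; case: ifP => ? // E; try discriminate E; exists x, y; split; [done|split; [done|lia]].
- by apply: good_stop => S1 S2 [[x [y [xy ->]]]]; rewrite W //; case: ifP => ?; case: ifP.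
- apply: (good_weaken (w2_good (k' := k') hn erefl)); try lia.
  move=> S [[x [y [xy ->]]]]; rewrite W //.
  have lx := ltn_ord x; have ly := ltn_ord y.
  case: ifP => ?; case: ifP => ? // E; try discriminate E.
    by exists x, y; split; [done|lia].
  by exists y, x; rewrite setUC; split; [done|lia].
- by apply: good_stop => S1 S2 [[x [y [xy ->]]]]; rewrite W //; case: ifP => ?; case: ifP.
- apply: (good_weaken (same_good (j := k'.+1) (s := 0 + 2 * q) (g := 0) _ _ _)); try lia.
  move=> S [[x [y [xy ->]]]]; rewrite W //.
  have lx := ltn_ord x; have ly := ltn_ord y.
  by case: ifP => ?; case: ifP => ? // E; try discriminate E; exists x, y; split; [done|split; [done|lia]].
Qed.

End S.

Theorem mainTheorem7 (k : nat) (hk : 2 <= k) :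
  exists t : strategy (2 ^ k),
    (forall S : {set 'I_(2 ^ k)}, #|S| = 2 ->
       legal_on t S /\ size (transcript t S) <= k.+1) /\
    (forall S1 S2 : {set 'I_(2 ^ k)}, #|S1| = 2 -> #|S2| = 2 ->
       transcript t S1 = transcript t S2 -> S1 = S2).
Proof.
case: k hk => [|[|k']] // _.
have hn : 2 ^ k'.+2 = 4 * 2 ^ k' by rewrite !expnS mulnA.
have [H1 H2] := top_good hn.
have toI : forall S : {set 'I_(2 ^ k'.+2)}, #|S| = 2 -> Itop S.
  by move=> S /eqP /cards2P [x [y [xy ->]]]; exists x, y.
exists (top_st (2 ^ k'.+2) k'); split.
  by move=> S /toI /H1.
by move=> S1 S2 /toI h1 /toI h2; apply: H2.
Qed.
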